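(* Fix a noise variance $\sigma_W^2>0$ and let $\lambda_\gamma(0,1)$ be the Gittins index (defined in the context) of an arm with standard normal prior $N(0,1)$. Then \[ \lambda_\gamma(0,1)\le \sqrt{2\log\left(\frac{1}{1-\gamma}\right)}+o(1)\quad\text{as } \gamma\to1. \]
   Context: One-armed Gaussian bandit: the arm has unknown quality $\theta\sim N(\mu,\sigma^2)$ (the prior), and conditional on $\theta$ the rewards $R_0,R_1,R_2,\ldots$ are i.i.d. $N(\theta,\sigma_W^2)$, where $\sigma_W^2>0$ is a fixed noise variance. Let $\mathcal{H}_t$ be the $\sigma$-algebra generated by $R_0,\ldots,R_{t-1}$ ($\mathcal{H}_0$ trivial). For a discount factor $\gamma\in(0,1)$ and a tax $\lambda\in\mathbb{R}$, define \[ V_\gamma^\lambda(\mu,\sigma)=\sup_{\tau\ge 1}\mathbb{E}\Big[\sum_{t=0}^{\tau}\gamma^t(\theta-\lambda)\Big], \] where the supremum is over stopping times $\tau\ge 1$ (possibly infinite) with respect to the filtration $(\mathcal{H}_t)_{t\ge0}$, and the expectation is under the model with prior $N(\mu,\sigma^2)$. The Gittins index is $\lambda_\gamma(\mu,\sigma^2)=\sup\{\lambda\in\mathbb{R} : V_\gamma^\lambda(\mu,\sigma)\ge 0\}$. Here $\mu=0$, $\sigma^2=1$. *)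

(* Defs.v *)
From HB Require Import structures.
From mathcomp Require Import all_boot all_order all_algebra.
From mathcomp Require Import all_classical all_reals all_analysis.
Set Implicit Arguments. Unset Strict Implicit. Unset Printing Implicit Defensive.
Import Order.TTheory GRing.Theory Num.Theory.
Import numFieldNormedType.Exports.
Local Open Scope classical_set_scope.
Local Open Scope ring_scope.

Section gittins.
Context {R : realType} {d : measure_display} {Omega : measurableType d}.
Variable P : probability Omega R.
Variables (theta : Omega -> R) (Rw : nat -> Omega -> R).

(* One-armed Gaussian bandit model: theta ~ N(mu, sigma^2) (sigma = std dev),
   and conditionally on theta the rewards R_0, R_1, ... are i.i.d. N(theta, sW^2)
   (sW = std dev).  The joint law of (theta, R_0, ..., R_{n-1}) is prescribed
   on all measurable rectangles, for every n, which determines it. *)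
Definition gauss_bandit_model (mu sigma sW : R) : Prop :=
  measurable_fun setT theta /\ (forall t, measurable_fun setT (Rw t)) /\
  forall (n : nat) (A : set R) (B : nat -> set R),
    measurable A -> (forall i, measurable (B i)) ->
    P [set w | A (theta w) /\ forall i, (i < n)%N -> B i (Rw i w)] =
    (\int[normal_prob mu sigma]_(x in A)
        \prod_(i < n) normal_prob x sW (B i))%E.

Definition history (t : nat) : set (set Omega) :=
  <<s [set E | exists i B, (i < t)%N /\ measurable B /\ E = Rw i @^-1` B] >>.

(* Stopping times tau >= 1 w.r.t. (H_t), possibly infinite (None = +oo). *)
Definition stopping_time_ge1 (tau : Omega -> option nat) : Prop :=
  (forall w, tau w <> Some 0%N) /\
  forall t : nat, history t [set w | exists s, tau w = Some s /\ (s <= t)%N].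

Definition disc_payoff (gamma lambda : R) (tau : Omega -> option nat)
    (w : Omega) : \bar R :=
  match tau w with
  | Some n => (\sum_(0 <= t < n.+1) (gamma ^+ t * (theta w - lambda))%:E)%E
  | None => (\sum_(t <oo) (gamma ^+ t * (theta w - lambda))%:E)%E
  end.

Definition gittins_value (gamma lambda : R) : \bar R :=
  ereal_sup [set (\int[P]_w disc_payoff gamma lambda tau w)%E
            | tau in stopping_time_ge1].

Definition gittins_index (gamma : R) : \bar R :=
  ereal_sup [set lambda%:E | lambda in [set l : R | (0 <= gittins_value gamma l)%E]].

End gittins.

(* Main.v *)
Require Import Defs.
From HB Require Import structures.
From mathcomp Require Import all_boot all_order all_algebra.
From mathcomp Require Import measurable_realfun.
From mathcomp Require Import all_classical all_reals all_analysis.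
From mathcomp Require Import ring lra.
Import Order.TTheory GRing.Theory Num.Theory.
Import numFieldNormedType.Exports.
Local Open Scope classical_set_scope.
Local Open Scope ring_scope.

Section aux.
Context {R : realType}.


Lemma geo_partial (n : nat) : \sum_(0 <= j < n) (2^-1 : R)^+j = 2 - 2 * (2^-1)^+n.
Proof.
elim: n => [|n IH]; first by rewrite big_geq // expr0; lra.
rewrite big_nat_recr //= IH exprS; lra.
Qed.

Lemma geo_bound (c : R) : 0 <= c ->
  (\sum_(0 <= j <oo) ((c * (2^-1)^+j)%:E) <= (2*c)%:E)%E.
Proof.
move=> c0; apply: lime_le.
  by apply: is_cvg_nneseries => n _ _; rewrite lee_fin mulr_ge0 // exprn_ge0.
near=> n; rewrite sumEFin lee_fin -mulr_sumr geo_partial.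
have : 0 <= (2^-1 : R)^+n by rewrite exprn_ge0.
nra.
Unshelve. all: by end_near. Qed.




Lemma peak_le : normal_peak (1:R) <= 2^-1.
Proof.
rewrite /normal_peak expr1n mul1r.
have h : (2:R) <= Num.sqrt (pi *+ 2).
  have -> : (2:R) = Num.sqrt (2^+2) by rewrite sqrtr_sqr ger0_norm.
  rewrite ler_sqrt; last exact: (mulrn_wge0 _ (pi_ge0 R)).
  have := @pi_ge2 R; rewrite -mulr_natr; lra.
rewrite lef_pV2 ?posrE //; lra.
Qed.

Lemma normal_itv_bound (b : R) : 0 <= b ->
  (normal_prob 0 1 [set` `[b, (b+1)%R[] <= (2^-1 * expR (- (b^+2) / 2))%R%:E)%E.
Proof.
move=> b0; rewrite /normal_prob.
apply: (@le_trans _ _ (\int[lebesgue_measure]_(x in [set` `[b, (b+1)%R[]) (cst (2^-1 * expR (- (b^+2) / 2))%R%:E x))%E).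
  apply: ge0_le_integral => //.
  - by move=> x _; rewrite lee_fin normal_pdf_ge0.
  - apply/measurable_EFinP/measurable_funTS; exact: measurable_normal_pdf.
  - move=> x /=; rewrite in_itv /= => /andP[bx _].
    rewrite lee_fin /normal_pdf oner_eq0 /=.
    apply: ler_pM; [exact: normal_peak_ge0|exact: normal_fun_ge0|exact: peak_le|].
    rewrite /normal_fun ler_expR subr0 expr1n.
    have : b^+2 <= x^+2 by rewrite ler_sqr ?nnegrE; lra.
    lra.
rewrite integral_cst //= lebesgue_measure_itv /= lte_fin ltrDl ltr01 /=.
by rewrite -EFinD addrAC subrr add0r mule1.
Qed.



Lemma expR2_ge4 : (4:R) <= expR 2.
Proof.
have -> : (2:R) = 1 + 1 by [].
rewrite expRD; have := expR_ge1Dx (1:R).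
have := expR_ge0 (1:R). nra.
Qed.

Lemma nat_le_pow2 (j : nat) : (j.+1)%:R <= (2:R) ^+ j.
Proof.
have h := ltn_expl j (isT : (1 < 2)%N).
by rewrite -natrX ler_nat.
Qed.

Lemma term_bound (a : R) (j : nat) : 2 <= a ->
  (j.+1)%:R * (2^-1 * expR (- (a + j%:R)^+2 / 2))
  <= 2^-1 * expR (- a^+2 / 2) * (2^-1)^+j.
Proof.
move=> a2.
have j0 : (0:R) <= j%:R by [].
have h1 : expR (- (a + j%:R)^+2 / 2) <= expR (- a^+2 / 2) * expR 2 ^- j.
  rewrite -expRM_natl -expRN -expRD ler_expR. nra.
have h2 : (j.+1)%:R * expR (2:R) ^- j <= (2^-1)^+j.
  have e2 := expR2_ge4; have e2p : 0 < expR (2:R) := expR_gt0 _.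
  have q : 2 / expR (2:R) <= 2^-1.
    by rewrite ler_pdivrMr // ; lra.
  apply: (le_trans (y := 2^+j * expR (2:R) ^- j)).
    by apply: ler_wpM2r; [rewrite invr_ge0 exprn_ge0 // ltW|exact: nat_le_pow2].
  rewrite -exprVn -exprMn; apply: lerXn2r; rewrite ?nnegrE //.
  all: try by rewrite mulr_ge0 // invr_ge0 ltW.
have e0 : 0 <= expR (- a^+2 / 2) := expR_ge0 _.
have n0 : (0:R) <= (j.+1)%:R by [].
have k1 := ler_wpM2l n0 h1.
have k2 := ler_wpM2l e0 h2.
move: k1 k2.
set E := expR (- (a + j%:R)^+2 / 2); set A := expR (- a^+2 / 2).
set N := (j.+1)%:R; set V := expR 2 ^+ j; set G := (2^-1)^+j.
move=> k1 k2.
have -> : N * (2^-1 * E) = 2^-1 * (N * E) by ring.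
have -> : 2^-1 * A * G = 2^-1 * (A * G) by ring.
apply: ler_wpM2l; first lra.
apply: (le_trans k1).
have -> : N * (A / V) = A * (N / V) by ring.
exact: k2.
Qed.

End aux.

Section lim.
Context {R : realType}.
Definition eps_fun (x : R) := Num.sqrt (2 * ln ((1 - x)^-1) + 9) - Num.sqrt (2 * ln ((1 - x)^-1)).

Lemma eps_fun_cvg : eps_fun x @[x --> 1^'-] --> 0.
Proof.
apply/cvgrPdist_lt => eps eps0.
set c := 9 / eps.
have c0 : 0 < c by rewrite divr_gt0.
have ce : c * eps = 9 by rewrite /c divfK // gt_eqF.
set M := c ^+ 2.
have hM : 1 - expR (- M) < 1 by have := expR_gt0 (- M); lra.
near=> x.
have x1 : x < 1 by near: x; exact: nbhs_left_lt.
have xM : 1 - expR (- M) < x by near: x; exact: nbhs_left_gt.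
rewrite /eps_fun; set L := ln ((1 - x)^-1).
have LM : M < L.
  rewrite -ltr_expR /L lnK; last by rewrite posrE invr_gt0; lra.
  have h : 1 - x < (expR M)^-1 by rewrite -expRN; lra.
  rewrite -[expR M]invrK ltf_pV2 ?posrE ?invr_gt0 ?expR_gt0 //; lra.
have M0 : 0 <= M by rewrite /M sqr_ge0.
set s1 := Num.sqrt (2 * L + 9); set s0 := Num.sqrt (2 * L).
have s1sq : s1 ^+ 2 = 2 * L + 9 by rewrite sqr_sqrtr //; lra.
have s0sq : s0 ^+ 2 = 2 * L by rewrite sqr_sqrtr //; lra.
have s1g : 0 <= s1 := sqrtr_ge0 _.
have s0g : 0 <= s0 := sqrtr_ge0 _.
have Mc : M = c * c by rewrite /M expr2.
rewrite expr2 in s1sq s0sq.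
have e0 : s0 <= s1 by nra.
rewrite sub0r normrN ger0_norm; last lra.
have s1c : c < s1 by nra.
nra.
Unshelve. all: by end_near. Qed.
End lim.

Section prob.
Context {R : realType} {d : measure_display} {Omega : measurableType d}.
Variable P : probability Omega R.
Variables (theta : Omega -> R) (Rw : nat -> Omega -> R) (sW : R).
Hypothesis hm : gauss_bandit_model P theta Rw 0 1 sW.

Lemma mpre (A : set R) : measurable A -> measurable (theta @^-1` A).
Proof.
move=> mA; rewrite -[_ @^-1` _]setTI; case: hm => mth _.
exact: (mth measurableT _ mA).
Qed.

Lemma P_theta {A : set R} : measurable A -> P (theta @^-1` A) = normal_prob 0 1 A.
Proof.
move=> mA; have := hm.2.2 0%N A (fun _ => setT) mA (fun _ => measurableT).
have -> : [set w | A (theta w) /\ forall i, (i < 0)%N -> setT (Rw i w)] = theta @^-1` A.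
  by apply/seteqP; split => w /=; [case|].
move=> ->; under eq_integral do rewrite big_ord0.
by rewrite integral_cst // mul1e.
Qed.

Definition Iset (a : R) (j : nat) : set R := let b := a + j%:R in [set` `[b, (b+1)%R[].

Definition Hfun (a K : R) (w : Omega) : \bar R :=
  (\sum_(0 <= j <oo) ((K * (j.+1)%:R) * \1_(theta @^-1` Iset a j) w)%:E)%E.

Lemma mIset a j : measurable (Iset a j).
Proof. exact: measurable_itv. Qed.

Lemma Hterm_ge0 (a K : R) j w : 0 <= K -> (0 <= ((K * (j.+1)%:R) * \1_(theta @^-1` Iset a j) w)%:E)%E.
Proof. by move=> K0; rewrite lee_fin !mulr_ge0. Qed.

Lemma Hterm_meas (a K : R) j : measurable_fun setT (fun w => ((K * (j.+1)%:R) * \1_(theta @^-1` Iset a j) w)%:E).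
Proof.
apply/measurable_EFinP; apply: measurable_funM => //.
apply: measurable_indic; apply: mpre; exact: mIset.
Qed.

Lemma Hfun_ge0 (a K : R) w : 0 <= K -> (0 <= Hfun a K w)%E.
Proof. by move=> K0; apply: nneseries_ge0 => j _ _; exact: Hterm_ge0. Qed.

Lemma Hfun_meas (a K : R) : 0 <= K -> measurable_fun setT (Hfun a K).
Proof.
move=> K0.
have -> : Hfun a K = (fun w => \sum_(j <oo | j \in xpredT) ((K * (j.+1)%:R) * \1_(theta @^-1` Iset a j) w)%:E)%E.
  apply/funext => w; rewrite /Hfun; congr (limn _); apply/funext => n.
apply: ge0_emeasurable_sum.
- by move=> k x _ _; exact: Hterm_ge0.
- by move=> k _; exact: Hterm_meas.
Qed.

Lemma int_Hfun (a K : R) : 2 <= a -> 0 <= K ->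
  (\int[P]_w Hfun a K w <= (K * expR (- a^+2 / 2))%:E)%E.
Proof.
move=> a2 K0; rewrite /Hfun integral_nneseries //; last first.
  by move=> n x _; exact: Hterm_ge0.
  by move=> n; exact: Hterm_meas.
apply: (@le_trans _ _ (\sum_(0 <= j <oo) ((K * (2^-1 * expR (- a^+2 / 2))) * (2^-1)^+j)%:E)%E); last first.
  have i2 : (0:R) <= 2^-1 by rewrite invr_ge0.
  have := geo_bound _ (mulr_ge0 K0 (mulr_ge0 i2 (expR_ge0 (- a^+2/2)))).
  move/le_trans; apply; rewrite lee_fin; lra.
apply: lee_nneseries.
  move=> j _ _; apply: integral_ge0 => x _; exact: Hterm_ge0.
move=> j _.
under eq_integral do rewrite EFinM.
have mS : measurable (theta @^-1` Iset a j) by apply: mpre; exact: mIset.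
rewrite ge0_integralZl_EFin //; try (by move=> x _; rewrite lee_fin);
  try (by apply/measurable_EFinP; exact: measurable_indic); try (by rewrite mulr_ge0).
rewrite integral_indic // setIT.
have PE : (P : {measure set Omega -> \bar R}) (theta @^-1` Iset a j) = normal_prob 0 1 (Iset a j) by exact: (P_theta (mIset a j)).
rewrite PE.
have j0 : (0:R) <= j%:R by [].
have hb := normal_itv_bound (a + j%:R) (ltac:(lra) : 0 <= a + j%:R).
apply: le_trans (lee_wpmul2l _ hb) _; first by rewrite lee_fin mulr_ge0.
rewrite -EFinM lee_fin.
have := term_bound a j a2.
have -> : K * (j.+1)%:R * (2^-1 * expR (- (a + j%:R) ^+ 2 / 2)) =
  K * ((j.+1)%:R * (2^-1 * expR (- (a + j%:R) ^+ 2 / 2))) by ring.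
have -> : K * (2^-1 * expR (- a ^+ 2 / 2)) * (2^-1)^+j = K * (2^-1 * expR (- a ^+ 2 / 2) * (2^-1)^+j) by ring.
by move=> h; apply: ler_wpM2l.
Qed.


Lemma Hfun_ge_term (a K : R) w : 0 <= K -> a <= theta w ->
  exists j : nat, theta w - a < (j.+1)%:R /\ ((K * (j.+1)%:R)%:E <= Hfun a K w)%E.
Proof.
move=> K0 aw.
have x0 : 0 <= theta w - a by lra.
have /andP[h1 h2] := truncn_itv x0.
set j := Num.trunc (theta w - a) in h1 h2.
exists j; split => //.
rewrite /Hfun.
apply: le_trans (nneseries_lim_ge j.+1 _); last by move=> n _ _; exact: Hterm_ge0.
rewrite big_nat_recr //=.
have -> : \1_(theta @^-1` Iset a j) w = 1 :> R.
  rewrite indicE mem_set //= /Iset /= in_itv /=; apply/andP; split; lra.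
rewrite mulr1; apply: leeDr.
by apply: sume_ge0 => i _; exact: Hterm_ge0.
Qed.

Lemma geo_sum (g : R) (n : nat) : (\sum_(0 <= t < n) g ^+ t) * (1 - g) = 1 - g ^+ n.
Proof.
elim: n => [|n IH]; first by rewrite big_geq // expr0 mul0r subrr.
by rewrite big_nat_recr //= mulrDl IH exprS; ring.
Qed.

Lemma payoff_form (g l : R) (tau : Omega -> option nat) w : 0 < g < 1 ->
  exists q : R, (1 <= q <= (1 - g)^-1) /\
    (disc_payoff theta g l tau w = ((theta w - l) * q)%:E).
Proof.
move=> /andP[g0 g1]; have g1' : 0 < 1 - g by lra.
rewrite /disc_payoff; case: (tau w) => [n|].
- exists (\sum_(0 <= t < n.+1) g ^+ t); split.
    apply/andP; split.
      rewrite big_nat_recl //= expr0 lerDl; apply: sumr_ge0 => i _.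
      by rewrite exprn_ge0 // ltW.
    rewrite -[X in _ <= X]div1r ler_pdivlMr //. have := geo_sum g n.+1. have := exprn_ge0 n.+1 (ltW g0). lra.
  by rewrite sumEFin mulr_sumr; congr (_%:E); apply: eq_bigr => i _; rewrite mulrC.
- exists (1 - g)^-1; split.
    by apply/andP; split => //; rewrite -[X in _ <= X]div1r ler_pdivlMr //; lra.
  apply: cvg_lim => //.
  apply/fine_cvgP; split; first by near=> n; rewrite sumEFin.
  have -> : (fine \o (fun n => (\sum_(0 <= t < n) ((g ^+ t * (theta w - l))%:E))%E)) =
    series (geometric (theta w - l) g).
    apply/funext => n /=; rewrite sumEFin /= /series /=.
    by apply: eq_bigr => i _; rewrite /geometric /= mulrC.
  apply: cvg_geometric_series.
  by rewrite ger0_norm ?ltW.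
Unshelve. all: by end_near. Qed.

Definition S2 : set R := [set` `]-oo, (2:R)[].
Definition T2 : set R := [set` `[(2:R), +oo[].

Lemma P_low : ((3/4)%:E <= P (theta @^-1` S2))%E.
Proof.
have mT : measurable (theta @^-1` T2) by apply: mpre; exact: measurable_itv.
have mS : measurable (theta @^-1` S2) by apply: mpre; exact: measurable_itv.
have -> : theta @^-1` S2 = ~` (theta @^-1` T2).
  apply/seteqP; split => x /=; rewrite /S2 /T2 /= !in_itv /= ?andbT; [move=> h1 h2|move=> h]; lra.
rewrite probability_setC //.
have HT : (P (theta @^-1` T2) <= (expR (- 2))%:E)%E.
  apply: (@le_trans _ _ (\int[P]_w (\1_(theta @^-1` T2) w)%:E)%E).
    by rewrite integral_indic // setIT.
  apply: (@le_trans _ _ (\int[P]_w Hfun 2 1 w)%E).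
    apply: ge0_le_integral => //.
    - by apply/measurable_EFinP; exact: measurable_indic.
    - by apply: Hfun_meas; exact: ler01.
    - move=> x _; case: (leP 2 (theta x)) => hx.
        have [j [_ hj]] := Hfun_ge_term 2 1 x ler01 hx.
        apply: le_trans hj; rewrite indicE mem_set /= /T2 /= ?in_itv /= ?andbT // lee_fin mul1r.
        by rewrite ler1n.
      rewrite indicE memNset /= /T2 /= ?in_itv /= ?andbT; first exact: Hfun_ge0.
      lra.
  apply: le_trans (@int_Hfun 2 1 _ _) _; [lra|lra|].
  rewrite lee_fin mul1r ler_expR expr2; lra.
have e2 : expR (-2) <= (4:R)^-1.
  rewrite expRN lef_pV2 ?posrE ?expR_gt0 //; exact: expR2_ge4.
have fP : P (theta @^-1` T2) \is a fin_num by rewrite ge0_fin_numE ?measure_ge0 // (le_lt_trans (probability_le1 _ mT)) ?ltey.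
move: HT; rewrite -(fineK fP) lee_fin -EFinB lee_fin => HT; lra.
Qed.

Lemma int_payoff (g l : R) tau : 0 < g < 1 -> 3 <= l ->
  (\int[P]_w disc_payoff theta g l tau w <=
    ((1 - g)^-1 * expR (- l^+2 / 2))%:E - (3/4)%:E)%E.
Proof.
move=> gb l3.
have g1' : 0 < 1 - g by case/andP: gb => ? ?; lra.
have K0 : 0 <= (1 - g)^-1 by rewrite invr_ge0 ltW.
rewrite integralE; apply: leeB.
- have l2 : 2 <= l by lra.
  apply: (le_trans _ (@int_Hfun l (1 - g)^-1 l2 K0)).
  rewrite ge0_integralTE; last by move=> x; exact: funepos_ge0.
  rewrite ge0_integralTE; last by move=> x; exact: Hfun_ge0.
  apply: le_ereal_sup => _ [h hle <-]; exists h => // x; apply: le_trans (hle x) _.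
  rewrite funeposE; have [q [/andP[q1 q2] ->]] := payoff_form g l tau x gb.
  case: (leP l (theta x)) => hx.
    have [j [jlt jle]] := Hfun_ge_term l (1 - g)^-1 x K0 hx.
    rewrite ge_max; apply/andP; split; last exact: (Hfun_ge0 _ _ _ K0).
    apply: le_trans jle; rewrite lee_fin.
    have h1 : (theta x - l) * q <= (theta x - l) * (1 - g)^-1.
      by apply: ler_wpM2l => //; lra.
    apply: (le_trans h1); rewrite mulrC; apply: ler_wpM2l => //; lra.
  rewrite ge_max; apply/andP; split; last exact: (Hfun_ge0 _ _ _ K0).
  apply: (le_trans _ (Hfun_ge0 l _ x K0)); rewrite lee_fin; nra.
- have mS : measurable (theta @^-1` S2) by apply: mpre; exact: measurable_itv.
  apply: le_trans P_low _.
  rewrite ge0_integralTE; last by move=> x; exact: funeneg_ge0.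
  apply: ereal_sup_ubound; exists (indic_nnsfun R mS).
    move=> x /=; rewrite funenegE; have [q [/andP[q1 q2] ->]] := payoff_form g l tau x gb.
    rewrite mindicE; case: (boolP (x \in theta @^-1` S2)) => hx.
      rewrite le_max; apply/orP; left; rewrite -EFinN lee_fin.
      move/set_mem: hx; rewrite /preimage /S2 /= in_itv /= => hx; nra.
    by rewrite le_max; apply/orP; right.
  by rewrite sintegral_indic.
Qed.

Lemma value_neg (g l : R) : 0 < g < 1 -> 3 <= l ->
  (1 - g)^-1 * expR (- l^+2 / 2) < 3/4 ->
  (gittins_value P theta Rw g l < 0)%E.
Proof.
move=> gb l3 hlt.
apply: (@le_lt_trans _ _ (((1 - g)^-1 * expR (- l^+2 / 2))%:E - (3/4)%:E)%E).
  apply: ge_ereal_sup => _ [tau _ <-]; exact: int_payoff.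
by rewrite -EFinB lte_fin; lra.
Qed.

Lemma index_bound (g : R) : 0 < g < 1 ->
  (gittins_index P theta Rw g <= (Num.sqrt (2 * ln ((1 - g)^-1) + 9))%:E)%E.
Proof.
move=> gb; have [g0 g1] := andP gb.
apply: ge_ereal_sup => _ [l hl <-]; rewrite lee_fin leNgt; apply/negP => Tl.
set L := ln ((1 - g)^-1) in Tl.
have L0 : 0 <= L by rewrite /L ln_ge0 // -[X in X <= _]invr1 lef_pV2 ?posrE; lra.
set s := Num.sqrt (2 * L + 9) in Tl.
have ssq : s * s = 2 * L + 9 by rewrite -expr2 sqr_sqrtr //; lra.
have s0 : 0 <= s := sqrtr_ge0 _.
have l3 : 3 <= l by nra.
have ll : 2 * L + 9 < l ^+ 2 by rewrite expr2; nra.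
move: hl; apply/negP; rewrite -ltNge; apply: value_neg => //.
have eL : expR (- L) = 1 - g.
  by rewrite expRN /L lnK ?invrK // posrE invr_gt0; lra.
have h1 : expR (- l^+2 / 2) < expR (- L) * expR (- (9/2)).
  by rewrite -expRD ltr_expR; lra.
have h9 : 4/3 < expR (9/2 : R) by have := expR_ge1Dx (9/2 : R); lra.
have h9' : expR (- (9/2)) < 3/4 :> R.
  rewrite expRN -[X in _ < X]invrK ltf_pV2 ?posrE ?expR_gt0 //; lra.
rewrite eL in h1.
have gp : 0 < (1 - g)^-1 by rewrite invr_gt0; lra.
have : (1 - g)^-1 * expR (- l^+2 / 2) < (1 - g)^-1 * ((1 - g) * expR (- (9/2))).
  by rewrite ltr_pM2l.
rewrite mulrA mulVf ?mul1r; last by lra.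
move=> h; lra.
Qed.

End prob.

Theorem lemma4 (R : realType) (d : measure_display) (Omega : measurableType d)
    (P : probability Omega R) (theta : Omega -> R) (Rw : nat -> Omega -> R)
    (sW : R) :
  0 < sW ->
  gauss_bandit_model P theta Rw 0 1 sW ->
  exists e : R -> R,
    (e x @[x --> 1^'-] --> 0) /\
    forall gamma : R, 0 < gamma < 1 ->
      (gittins_index P theta Rw gamma <=
        (Num.sqrt (2 * ln ((1 - gamma)^-1)) + e gamma)%:E)%E.
Proof.
move=> _ hm; exists eps_fun; split; first exact: eps_fun_cvg.
move=> g hg; rewrite /eps_fun addrC subrK.
exact: (@index_bound R d Omega P theta Rw sW hm g hg).
Qed.
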